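(* Let $G$ be a countably based profinite group with normalised Haar measure $\mu$, let $x\in G$, and let $(N_i)_{i\geq1}$ be a descending chain of open normal subgroups of $G$ with $\bigcap_i N_i=1$. Define $c_1(x)=\sup_{i\geq1}|C_{G/N_i}(xN_i)|$, $c_2(x)=\sup_{N\trianglelefteq_o G}|C_{G/N}(xN)|$, and $c_3(x)=\sup_{K\trianglelefteq G}|C_{G/K}(xK)|$ (with $K$ ranging over closed normal subgroups, and $c_3(x)=\infty$ if some $C_{G/K}(xK)$ is infinite). Then $c_1(x)=c_2(x)=c_3(x)=:c(x)$ and $\mu(x^G)=1/c(x)$ (interpreted as $0$ if $c(x)=\infty$), where $x^G=\{g^{-1}xg: g\in G\}$.
   Context: $N\trianglelefteq_o G$ means $N$ is an open normal subgroup of $G$. *)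

(* Defs.v *)
From HB Require Import structures.
From mathcomp Require Import all_boot all_order all_algebra.
From mathcomp Require Import all_classical all_reals all_analysis.
Set Implicit Arguments. Unset Strict Implicit. Unset Printing Implicit Defensive.
Import Order.TTheory GRing.Theory Num.Theory.
Local Open Scope classical_set_scope.
Local Open Scope ereal_scope.

(* A profinite group: a compact, Hausdorff, totally disconnected topological
   group.  The carrier is a pointed topological space (pointedness is harmless:
   a group is inhabited by its identity). *)
Record profinite_group := ProfiniteGroup {
  pg_sort :> ptopologicalType;
  pg_mul : pg_sort -> pg_sort -> pg_sort;
  pg_inv : pg_sort -> pg_sort;
  pg_one : pg_sort;
  pg_mulA : forall a b c, pg_mul a (pg_mul b c) = pg_mul (pg_mul a b) c;
  pg_mul1g : forall a, pg_mul pg_one a = a;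
  pg_mulg1 : forall a, pg_mul a pg_one = a;
  pg_mulVg : forall a, pg_mul (pg_inv a) a = pg_one;
  pg_mulgV : forall a, pg_mul a (pg_inv a) = pg_one;
  pg_mul_cont : continuous (fun p : pg_sort * pg_sort => pg_mul p.1 p.2);
  pg_inv_cont : continuous pg_inv;
  pg_compact : compact [set: pg_sort];
  pg_hausdorff : hausdorff_space pg_sort;
  pg_tdisc : totally_disconnected [set: pg_sort] }.

Section Defs.
Variable G : profinite_group.
Local Notation "a * b" := (pg_mul a b).
Local Notation "a ^-1" := (pg_inv a).

Definition is_normal_subgroup (H : set G) : Prop :=
  [/\ H (pg_one G),
      (forall a b, H a -> H b -> H (a * b ^-1)) &
      (forall g h, H h -> H (g ^-1 * (h * g)))].

Definition open_normal (N : set G) : Prop := is_normal_subgroup N /\ open N.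
Definition closed_normal (K : set G) : Prop := is_normal_subgroup K /\ closed K.

Definition lcoset (g : G) (H : set G) : set G := [set g * h | h in H].
Definition setmul (A B : set G) : set G := [set a * b | a in A & b in B].
Definition quot (H : set G) : set (set G) := [set lcoset g H | g in [set: G]].
Definition cent_quot (H : set G) (x : G) : set (set G) :=
  [set C | quot H C /\ setmul C (lcoset x H) = setmul (lcoset x H) C].

Definition conj_class (x : G) : set G := [set g ^-1 * (x * g) | g in [set: G]].

Definition borel : Type := g_sigma_algebraType (@open G).

Definition haar_prob (R : realType) (mu : probability borel R) : Prop :=
  forall (g : G) (A : set borel), measurable A ->
    mu [set g * a | a in A] = mu A.
End Defs.

(* cardinality of a set as an extended real: the supremum of the n such that
   A contains n distinct elements; i.e. |A| if A is finite, +oo otherwise *)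
Definition ecard (R : realType) (T : Type) (A : set T) : \bar R :=
  ereal_sup [set (n%:R)%:E | n in [set n : nat | (`I_n #<= A)%card]].

(* Main.v *)
Require Import Defs.
From HB Require Import structures.
From mathcomp Require Import all_boot all_order all_algebra.
From mathcomp Require Import all_classical all_reals all_analysis.
Import Order.TTheory GRing.Theory Num.Theory.
Local Open Scope classical_set_scope.
Local Open Scope ereal_scope.
Set Implicit Arguments. Unset Strict Implicit. Unset Printing Implicit Defensive.

Section Grp.
Variable G : profinite_group.
Local Notation "a ⋅ b" := (@pg_mul G a b) (at level 40, left associativity).
Local Notation "a ^-1" := (@pg_inv G a).
Local Notation one := (pg_one G).

Lemma pmulA a b c : a ⋅ (b ⋅ c) = a ⋅ b ⋅ c. Proof. exact: pg_mulA. Qed.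
Lemma pmul1g a : one ⋅ a = a. Proof. exact: pg_mul1g. Qed.
Lemma pmulg1 a : a ⋅ one = a. Proof. exact: pg_mulg1. Qed.
Lemma pmulVg a : a^-1 ⋅ a = one. Proof. exact: pg_mulVg. Qed.
Lemma pmulgV a : a ⋅ a^-1 = one. Proof. exact: pg_mulgV. Qed.
Lemma pmulKg a b : a^-1 ⋅ (a ⋅ b) = b.
Proof. by rewrite pmulA pmulVg pmul1g. Qed.
Lemma pmulKVg a b : a ⋅ (a^-1 ⋅ b) = b.
Proof. by rewrite pmulA pmulgV pmul1g. Qed.
Lemma pmulgK a b : b ⋅ a ⋅ a^-1 = b.
Proof. by rewrite -pmulA pmulgV pmulg1. Qed.
Lemma pmulgKV a b : b ⋅ a^-1 ⋅ a = b.
Proof. by rewrite -pmulA pmulVg pmulg1. Qed.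
Lemma pinvK a : (a^-1)^-1 = a.
Proof. by rewrite -[LHS]pmulg1 -(pmulVg a) pmulA pmulVg pmul1g. Qed.
Lemma pinvM a b : (a ⋅ b)^-1 = b^-1 ⋅ a^-1.
Proof.
rewrite -[RHS]pmulg1 -[one in RHS](pmulgV (a ⋅ b)) pmulA.
by rewrite -[b^-1 ⋅ a^-1 ⋅ (a ⋅ b)]pmulA pmulKg pmulVg pmul1g.
Qed.
Lemma pinv1 : one^-1 = one.
Proof. by rewrite -[LHS]pmul1g pmulgV. Qed.
Lemma pmulI a b c : a ⋅ b = a ⋅ c -> b = c.
Proof. by move=> h; rewrite -(pmulKg a b) h pmulKg. Qed.

Definition eqv (H : set G) a b := H (a^-1 ⋅ b).

Section Normal.
Context {H : set G} (hH : is_normal_subgroup H).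

Lemma nH1 : H one. Proof. by case: hH. Qed.
Lemma nHB {a b} : H a -> H b -> H (a ⋅ b^-1). Proof. by case: hH => _ h _; apply: h. Qed.
Lemma nHV {a} : H a -> H a^-1.
Proof. by move=> Ha; rewrite -[a^-1]pmul1g; apply: nHB => //; apply: nH1. Qed.
Lemma nHM {a b} : H a -> H b -> H (a ⋅ b).
Proof. by move=> Ha Hb; rewrite -[b]pinvK; apply: nHB => //; apply: nHV. Qed.
Lemma nHJ g {h} : H h -> H (g^-1 ⋅ (h ⋅ g)). Proof. by case: hH => _ _ h'; apply: h'. Qed.
Lemma nHJ' g {h} : H h -> H (g ⋅ (h ⋅ g^-1)).
Proof. by move=> Hh; have := nHJ (g^-1) Hh; rewrite pinvK. Qed.

Lemma eqv_refl a : eqv H a a. Proof. by rewrite /eqv pmulVg; apply: nH1. Qed.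
Lemma eqv_sym {a b} : eqv H a b -> eqv H b a.
Proof. by move=> /nHV; rewrite /eqv pinvM pinvK. Qed.
Lemma eqv_trans {a b c} : eqv H a b -> eqv H b c -> eqv H a c.
Proof.
by move=> h1 h2; have := nHM h1 h2; rewrite /eqv -pmulA pmulKVg.
Qed.
Lemma eqvML c {a b} : eqv H a b -> eqv H (c ⋅ a) (c ⋅ b).
Proof. by rewrite /eqv pinvM -pmulA pmulKg. Qed.
Lemma eqvMR c {a b} : eqv H a b -> eqv H (a ⋅ c) (b ⋅ c).
Proof.
move=> h; have := nHJ c h; rewrite /eqv pinvM.
by rewrite !pmulA.
Qed.
Lemma eqvM {a a' b b'} : eqv H a a' -> eqv H b b' -> eqv H (a ⋅ b) (a' ⋅ b').
Proof.
move=> h1 h2; apply: eqv_trans (eqvMR b h1) _; exact: eqvML.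
Qed.
Lemma eqvV {a b} : eqv H a b -> eqv H a^-1 b^-1.
Proof.
move=> h; have := nHJ' a (nHV h); rewrite /eqv pinvM !pinvK.
by rewrite pmulgK.
Qed.
Lemma eqv1 a : H a <-> eqv H one a.
Proof. by rewrite /eqv pinv1 pmul1g. Qed.

Lemma lcosetE g : lcoset g H = [set y | eqv H g y].
Proof.
apply/seteqP; split => y.
  by case=> h Hh <-; rewrite /eqv /= pmulKg.
by move=> /= e; exists (g^-1 ⋅ y) => //; rewrite pmulKVg.
Qed.

Lemma lcoset_eq a b : lcoset a H = lcoset b H <-> eqv H a b.
Proof.
rewrite !lcosetE; split => [e|e].
  have : [set y | eqv H b y] b by exact: eqv_refl.
  by rewrite -e.
apply/seteqP; split => y /= h.
  exact: eqv_trans (eqv_sym e) h.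
exact: eqv_trans e h.
Qed.

Lemma lcoset_mem g : lcoset g H g.
Proof. by rewrite lcosetE; apply: eqv_refl. Qed.

Lemma setmul_lcoset a b : setmul (lcoset a H) (lcoset b H) = lcoset (a ⋅ b) H.
Proof.
rewrite !lcosetE; apply/seteqP; split => y.
  case=> u /= hu [v /= hv <-]; exact: eqvM.
move=> /= h; exists a; first exact: eqv_refl.
exists (a^-1 ⋅ y) => /=; last by rewrite pmulKVg.
by have := eqvML (a^-1) h; rewrite pmulKg.
Qed.

Lemma cent_quotE x C : cent_quot H x C <->
  exists g, C = lcoset g H /\ eqv H (g ⋅ x) (x ⋅ g).
Proof.
split.
  case=> -[g _ <-]; rewrite !setmul_lcoset => /lcoset_eq e.
  by exists g.
case=> g [-> e]; split; first by exists g.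
by rewrite !setmul_lcoset; apply/lcoset_eq.
Qed.

End Normal.
End Grp.
Section Topo.
Variable G : profinite_group.
Local Notation "a ⋅ b" := (@pg_mul G a b) (at level 40, left associativity).
Local Notation "a ^-1" := (@pg_inv G a).
Local Notation one := (pg_one G).

Lemma contMM (f h : G -> G) : continuous f -> continuous h ->
  continuous (fun y => f y ⋅ h y).
Proof.
move=> cf ch y.
apply: (continuous_comp (f := fun y => (f y, h y))
   (g := fun p : G * G => p.1 ⋅ p.2)); last exact: pg_mul_cont.
exact: (cvg_pair (cf y) (ch y)).
Qed.

Lemma contL g : continuous (fun y : G => g ⋅ y).
Proof. by apply: contMM => //; move=> y; [exact: cvg_cst | exact: cvg_id]. Qed.

Lemma contConj x : continuous (fun g : G => g^-1 ⋅ (x ⋅ g)).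
Proof.
apply: contMM; first exact: pg_inv_cont.
exact: contL.
Qed.

Lemma lcoset_pre g (N : set G) : lcoset g N = (fun y => g^-1 ⋅ y) @^-1` N.
Proof.
apply/seteqP; split => y /=.
  by case=> h Nh <-; rewrite pmulKg.
by move=> Ny; exists (g^-1 ⋅ y) => //; rewrite pmulKVg.
Qed.

Lemma open_lcoset g (N : set G) : open N -> open (lcoset g N).
Proof.
move=> oN; rewrite lcoset_pre; apply: open_comp => //.
by move=> y _; apply: contL.
Qed.

Lemma open_closed_subgroup (N : set G) : is_normal_subgroup N -> open N -> closed N.
Proof.
move=> hN oN; rewrite -openC.
have -> : ~` N = \bigcup_(g in ~` N) lcoset g N.
  apply/seteqP; split => y.
    by move=> nNy; exists y => //; apply: lcoset_mem hN y.
  case=> g nNg; rewrite lcosetE /= => e Ny; apply: nNg.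
  by have := nHB hN Ny e; rewrite /eqv pinvM pinvK pmulA pmulgV pmul1g.
by apply: bigcup_open => g _; apply: open_lcoset.
Qed.

Lemma open_super (N H : set G) : open N -> N one -> N `<=` H ->
  (forall a b, H a -> H b -> H (a ⋅ b)) -> open H.
Proof.
move=> oN N1 NH HM.
have -> : H = \bigcup_(h in H) lcoset h N.
  apply/seteqP; split => y.
    move=> Hy; exists y => //; exists one; last by rewrite pmulg1.
    exact: N1.
  by case=> h Hh [n Nn <-]; apply: HM => //; apply: NH.
by apply: bigcup_open => g _; apply: open_lcoset.
Qed.

Lemma conj_closed (x : G) : closed (conj_class x).
Proof.
apply: compact_closed; first exact: pg_hausdorff.
rewrite /conj_class; apply: continuous_compact; last exact: pg_compact.
apply: continuous_subspaceT => g; exact: contConj.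
Qed.

End Topo.
From mathcomp Require Import zify.

Section Chain.
Variable G : profinite_group.
Local Notation "a ⋅ b" := (@pg_mul G a b) (at level 40, left associativity).
Local Notation "a ^-1" := (@pg_inv G a).
Local Notation one := (pg_one G).
Variable N : nat -> set G.
Hypothesis hNo : forall i, (1 <= i)%N -> open_normal (N i).
Hypothesis hNdec : forall i, (1 <= i)%N -> N i.+1 `<=` N i.
Hypothesis hNcap : \bigcap_(i in [set i | (1 <= i)%N]) N i = [set one].

Lemma Ndec {a b} : (1 <= a)%N -> (a <= b)%N -> N b `<=` N a.
Proof.
move=> a1 /subnK <-; elim: (b - a)%N => [|k IH] //=.
rewrite addSn; apply: subset_trans IH; apply: hNdec; lia.
Qed.

Lemma basis (U : set G) : open U -> U one ->
  exists i, (1 <= i)%N /\ N i `<=` U.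
Proof.
move=> oU U1.
pose f := fun i : nat => if i == 0%N then U else ~` N i.
have fo : forall i, [set: nat] i -> open (f i).
  move=> i _; rewrite /f; case: eqP => [_|/eqP i0]; first exact: oU.
  have i1 : (1 <= i)%N by rewrite lt0n.
  have [hN oN] := hNo i1.
  by rewrite openC; apply: open_closed_subgroup.
have fcov : [set: G] `<=` cover [set: nat] f.
  move=> y _.
  case: (pselect (y = one)) => [->|ny]; first by exists 0%N.
  have [i [i1 nNy]] : exists i, (1 <= i)%N /\ ~ N i y.
    apply: contrapT => nex; apply: ny.
    have : (\bigcap_(i in [set i | (1 <= i)%N]) N i) y.
      by move=> i i1; apply: contrapT => nNy; apply: nex; exists i.
    by rewrite hNcap.
  exists i => //; rewrite /f; case: eqP => // i0; by move: i1; rewrite i0.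
have := @pg_compact G; rewrite compact_cover => /(_ nat setT f fo fcov) [D' _ cov].
  pose m := maxn 1 (\max_(i <- finmap.enum_fset D') i).
  exists m; split; first exact: leq_maxl.
  move=> y Nmy; have [i Di] := cov y I.
  rewrite /f; case: eqP => // /eqP i0 nNiy.
  exfalso; apply: nNiy; apply: (Ndec _ _ Nmy); first by rewrite lt0n.
  apply: leq_trans (leq_maxr _ _).
  exact: (leq_bigmax_seq (F := id) i Di).
Qed.

Lemma notin_closed (K : set G) (g : G) : closed K -> ~ K g ->
  exists i, (1 <= i)%N /\ forall n, N i n -> ~ K (g ⋅ n).
Proof.
move=> cK nKg.
have oU : open ((fun n => g ⋅ n) @^-1` (~` K)).
  by apply: open_comp; [move=> y _; apply: contL | rewrite openC].
have [|i [i1 sub]] := basis oU; first by rewrite /= pmulg1.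
by exists i; split => // n /sub.
Qed.

Lemma notin_closed_fin (K : set G) (h : nat -> G) (Q : nat -> Prop) B :
  closed K -> (forall p, (p < B)%N -> Q p -> ~ K (h p)) ->
  exists i, (1 <= i)%N /\
    forall p, (p < B)%N -> Q p -> forall n, N i n -> ~ K (h p ⋅ n).
Proof.
move=> cK; elim: B => [|B IH] hyp; first by exists 1%N.
have [|i1 [i11 H1]] := IH; first by move=> p pB; apply: hyp; lia.
case: (pselect (Q B)) => [QB|nQB]; last first.
  exists i1; split => // p; rewrite ltnS leq_eqVlt => /orP[/eqP ->//|pB].
  exact: H1.
have [i2 [i21 H2]] := notin_closed cK (hyp B (ltnSn B) QB).
exists (maxn i1 i2); split; first lia.
move=> p; rewrite ltnS leq_eqVlt => /orP[/eqP -> _|pB Qp] n Nn.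
  exact (H2 n (Ndec i21 (leq_maxr i1 i2) Nn)).
exact (H1 p pB Qp n (Ndec i11 (leq_maxl i1 i2) Nn)).
Qed.

End Chain.

Definition XN (G : profinite_group) (H : set G) (x : G) : set G :=
  [set y | exists2 c, conj_class x c & H (pg_mul (pg_inv c) y)].

Section XNsec.
Variable G : profinite_group.
Local Notation "a ⋅ b" := (@pg_mul G a b) (at level 40, left associativity).
Local Notation "a ^-1" := (@pg_inv G a).
Local Notation one := (pg_one G).

Lemma XN_open (H : set G) x : open H -> open (XN H x).
Proof.
move=> oH.
have -> : XN H x = \bigcup_(c in conj_class x) lcoset c H.
  apply/seteqP; split => y.
    by case=> c cc Hy; exists c => //; rewrite lcoset_pre.
  by case=> c cc; rewrite lcoset_pre => Hy; exists c.
by apply: bigcup_open => c _; apply: open_lcoset.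
Qed.

Lemma conj_XN (H : set G) x : H one -> conj_class x `<=` XN H x.
Proof. by move=> H1 c cc; exists c => //; rewrite pmulVg. Qed.

Lemma XN_mono (H M : set G) x : H `<=` M -> XN H x `<=` XN M x.
Proof. by move=> HM y [c cc Hc]; exists c => //; apply: HM. Qed.

Variable N : nat -> set G.
Hypothesis hNo : forall i, (1 <= i)%N -> open_normal (N i).
Hypothesis hNdec : forall i, (1 <= i)%N -> N i.+1 `<=` N i.
Hypothesis hNcap : \bigcap_(i in [set i | (1 <= i)%N]) N i = [set one].

Lemma capXN x i0 : (1 <= i0)%N ->
  \bigcap_n XN (N (n + i0)%N) x = conj_class x.
Proof.
move=> i01; apply/seteqP; split; last first.
  move=> c cc n _; apply: conj_XN => //.
  have hN := (hNo (i := (n + i0)%N) ltac:(lia)).1; exact: nH1 hN.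
move=> y yin; apply: contrapT => ny.
have oU : open ((fun n => y ⋅ n) @^-1` (~` conj_class x)).
  by apply: open_comp; [move=> z _; apply: contL | rewrite openC; apply: conj_closed].
have [|i [i1 sub]] := basis hNo hNdec hNcap oU; first by rewrite /= pmulg1.
pose j := maxn i i0.
have := yin (j - i0)%N I; rewrite subnK ?leq_maxr // => -[c cc Nj].
have hN := (hNo (i := j) ltac:(lia)).1.
have /sub /= := Ndec hNdec i1 (leq_maxl i i0) (nHV hN Nj).
by rewrite pinvM pinvK pmulKVg.
Qed.

End XNsec.
Lemma open_meas (G : profinite_group) (A : set G) : open A ->
  measurable (A : set (borel G)).
Proof. by move=> oA; rewrite /measurable /=; exact: (@sub_sigma_algebra _ setT (@open G) A oA). Qed.

Section Count.
Variable G : profinite_group.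
Local Notation "a ⋅ b" := (@pg_mul G a b) (at level 40, left associativity).
Local Notation "a ^-1" := (@pg_inv G a).
Local Notation one := (pg_one G).
Variables (R : realType) (mu : probability (borel G) R).
Hypothesis hmu : haar_prob mu.
Variable x : G.
Variable N : set G.
Hypotheses (hN : is_normal_subgroup N) (oN : open N).

Definition rep (g : G) : G := xget one (lcoset g N).

Lemma repP g : eqv N g (rep g).
Proof.
have := @xgetPex _ one (lcoset g N) (ex_intro _ g (lcoset_mem hN g)).
by rewrite {1}lcosetE.
Qed.

Lemma rep_eq a b : eqv N a b -> rep a = rep b.
Proof. by move=> e; rewrite /rep (proj2 (lcoset_eq hN a b) e). Qed.

Lemma rep_rep g : rep (rep g) = rep g.
Proof. exact: (rep_eq (eqv_sym hN (repP g))). Qed.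

Lemma fin_reps : exists Q : seq G,
  [/\ uniq Q, forall g, rep g \in Q & forall q, q \in Q -> rep q = q].
Proof.
have fo : forall g, [set: G] g -> open (lcoset g N).
  by move=> g _; apply: open_lcoset.
have fcov : [set: G] `<=` cover [set: G] (fun g => lcoset g N).
  by move=> y _; exists y => //; apply: lcoset_mem hN y.
have := @pg_compact G; rewrite compact_cover => /(_ G setT _ fo fcov) [D' _ cov].
exists (undup (map rep (finmap.enum_fset D'))); split.
- exact: undup_uniq.
- move=> g; have [d Dd] := cov g I; rewrite lcosetE => e.
  rewrite mem_undup -(rep_eq e); apply: map_f; exact: Dd.
- by move=> q; rewrite mem_undup => /mapP [d _ ->]; exact: rep_rep.
Qed.

Definition conjI (g : G) := g^-1 ⋅ (x ⋅ g).

Lemma conj_compat a b : eqv N a b -> eqv N (conjI a) (conjI b).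
Proof. by move=> e; rewrite /conjI; exact: (eqvM hN (eqvV hN e) (eqvML x e)). Qed.

Section WithQ.
Variable Q : seq G.
Hypotheses (Quniq : uniq Q) (Qrep : forall g, rep g \in Q)
  (Qfix : forall q, q \in Q -> rep q = q).

Local Notation n := (size Q).
Definition rI (i : 'I_n) : G := nth one Q i.
Lemma toI_proof g : (index (rep g) Q < n)%N.
Proof. by rewrite index_mem. Qed.
Definition toI (g : G) : 'I_n := Ordinal (toI_proof g).

Lemma rI_toI g : rI (toI g) = rep g.
Proof. exact: nth_index. Qed.

Lemma toI_rI i : toI (rI i) = i.
Proof.
apply: val_inj => /=; rewrite Qfix ?mem_nth // index_uniq //.
Qed.

Lemma eqv_toI g : eqv N g (rI (toI g)).
Proof. rewrite rI_toI; exact: repP. Qed.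

Lemma toI_eqP a b : toI a = toI b <-> eqv N a b.
Proof.
split => [e|e].
  have e1 := eqv_toI a; have e2 := eqv_toI b; rewrite e in e1.
  exact: (eqv_trans hN e1 (eqv_sym hN e2)).
by apply: val_inj => /=; rewrite (rep_eq e).
Qed.

Lemma coset_meas i : mu (lcoset (rI i) N) = mu N.
Proof. exact: hmu (open_meas oN). Qed.

Lemma preI_meas (S : {set 'I_n}) : mu [set y | toI y \in S] = (mu N *+ #|S|)%R.
Proof.
have -> : [set y | toI y \in S] = \big[setU/set0]_(i < n | i \in S) lcoset (rI i) N.
  apply/seteqP; split.
    move=> y /= yS; rewrite (bigD1 (toI y)) //=; left.
    by rewrite lcosetE /=; apply: (eqv_sym hN); exact: eqv_toI.
  apply: (@big_ind (set G) (fun A : set G => A `<=` [set y | toI y \in S])) => //.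
    by move=> A B hA hB z [/hA|/hB].
  move=> i iS z; rewrite lcosetE /= => e.
  by have := proj2 (toI_eqP (rI i) z) e; rewrite toI_rI => <-.
rewrite measure_bigsetU_ord //.
- rewrite (eq_bigr (fun _ => mu N)); last by move=> i _; exact: coset_meas.
  by rewrite sumr_const.
- by move=> i; apply: open_meas; apply: open_lcoset.
- move=> i j _ _ [y []]; rewrite !lcosetE /= => ei ej.
  have : toI (rI i) = toI (rI j).
    by apply/toI_eqP; exact: (eqv_trans hN ei (eqv_sym hN ej)).
  by rewrite !toI_rI.
Qed.


Definition Phi (i : 'I_n) : 'I_n := toI (conjI (rI i)).
Definition Cen : {set 'I_n} := [set i | `[< eqv N (rI i ⋅ x) (x ⋅ rI i) >]]%SET.
Definition Kset : {set 'I_n} := [set Phi i | i in 'I_n]%SET.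

Lemma toI_conj g : toI (conjI g) = Phi (toI g).
Proof. apply/toI_eqP; apply: conj_compat; exact: eqv_toI. Qed.

Lemma XN_pre : XN N x = [set y | toI y \in Kset].
Proof.
apply/seteqP; split => y /=.
  case=> c [g _ <-] e.
  have -> : toI y = Phi (toI g).
    by rewrite -toI_conj; apply/toI_eqP; apply: (eqv_sym hN).
  by rewrite /Kset; apply: imset_f.
rewrite /Kset; case/imsetP => i _ e; exists (conjI (rI i)); first by exists (rI i).
by have := proj1 (toI_eqP _ _) e; move/(eqv_sym hN).
Qed.

Lemma Cen_eqv a b : eqv N a b ->
  eqv N (a ⋅ x) (x ⋅ a) -> eqv N (b ⋅ x) (x ⋅ b).
Proof.
move=> e h.
apply: (eqv_trans hN (eqv_sym hN (eqvMR hN x e))).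
apply: (eqv_trans hN h); exact: eqvML.
Qed.

Lemma card_fiber i0 : #|[set i | Phi i == Phi i0]%SET| = #|Cen|.
Proof.
pose psi (h : 'I_n) := toI (rI h ⋅ rI i0).
pose psi' (i : 'I_n) := toI (rI i ⋅ (rI i0)^-1).
have K1 h : psi' (psi h) = h.
  rewrite /psi' /psi -[RHS]toI_rI; apply/toI_eqP.
  have := eqvMR hN ((rI i0)^-1) (eqv_sym hN (eqv_toI (rI h ⋅ rI i0))).
  by rewrite pmulgK.
have K2 i : psi (psi' i) = i.
  rewrite /psi' /psi -[RHS]toI_rI; apply/toI_eqP.
  have := eqvMR hN (rI i0) (eqv_sym hN (eqv_toI (rI i ⋅ (rI i0)^-1))).
  by rewrite pmulgKV.
have -> : [set i | Phi i == Phi i0]%SET = psi @: Cen.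
  apply/setP => i; rewrite inE; apply/eqP/imsetP.
    move=> E; exists (psi' i); last by rewrite K2.
    rewrite inE; apply/asboolP.
    apply: (Cen_eqv (eqv_toI (rI i ⋅ (rI i0)^-1))).
    have E' := proj1 (toI_eqP _ _) E.
    have := eqvMR hN ((rI i0)^-1) (eqvML (rI i) E').
    rewrite /conjI pmulKVg !pmulA pmulgK => h.
    exact: (eqv_sym hN h).
  case=> h; rewrite inE => /asboolP hC ->.
  rewrite /psi -toI_conj -[i0 in RHS]toI_rI -toI_conj; apply/toI_eqP.
  have h1 : eqv N x ((rI h)^-1 ⋅ (x ⋅ rI h)).
    have := eqvML ((rI h)^-1) hC; by rewrite pmulKg.
  have := eqvML ((rI i0)^-1) (eqvMR hN (rI i0) (eqv_sym hN h1)).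
  by rewrite /conjI pinvM !pmulA.
rewrite card_in_imset //.
by move=> a b _ _ e; rewrite -(K1 a) -(K1 b) e.
Qed.

Lemma card_orbit : n = (#|Kset| * #|Cen|)%N.
Proof.
have E : (\sum_(i in 'I_n) 1)%N = n by rewrite sum1_card card_ord.
rewrite -[LHS]E.
rewrite (partition_big_imset Phi) /=.
rewrite -/Kset.
rewrite -sum_nat_const; apply: eq_bigr => j; rewrite /Kset => /imsetP [i0 _ ->].
rewrite sum1_card -(card_fiber i0); apply: eq_card => i.
by rewrite !inE.
Qed.


Lemma mu_XN_mul : (mu (XN N x) *+ #|Cen|)%R = 1.
Proof.
have := preI_meas [set: 'I_n]%SET; rewrite cardsT card_ord.
have -> : [set y | toI y \in [set: 'I_n]%SET] = setT.
  by apply/seteqP; split => // y _; rewrite /= inE.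
rewrite probability_setT => h1.
by rewrite XN_pre preI_meas h1 [in RHS]card_orbit mulrnA.
Qed.

Lemma Cen_pos : (0 < #|Cen|)%N.
Proof.
apply/card_gt0P; exists (toI one); rewrite inE; apply/asboolP.
apply: (Cen_eqv (eqv_toI one)); rewrite pmul1g pmulg1; exact: eqv_refl.
Qed.

Lemma mu_XN : mu (XN N x) = ((#|Cen|%:R)^-1)%:E.
Proof.
have := mu_XN_mul; have := Cen_pos.
case: #|Cen| => // c _.
have : (0 <= mu (XN N x))%E by [].
case: (mu (XN N x)) => [r _ | _ | //].
- move=> h0; have : (r%:E *+ c.+1 = 1 :> \bar R)%E by exact: h0.
  rewrite -EFin_natmul => -[h].
  have -> : ((c.+1%:R)^-1 = r * c.+1%:R / c.+1%:R)%R by rewrite mulr_natr h mul1r.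
  by rewrite mulfK // pnatr_eq0.
- move=> h0; have : (+oo *+ c.+1 = 1 :> \bar R)%E by exact: h0.
  by rewrite enatmul_pinfty.
Qed.

Definition toIC (C : set G) : 'I_n := toI (xget one C).

Lemma toIC_coset g : toIC (lcoset g N) = toI g.
Proof.
rewrite /toIC -/(rep g); apply/toI_eqP; apply: (eqv_sym hN); exact: repP.
Qed.

Lemma cardle_Cen m : (`I_m #<= cent_quot N x)%card <-> (m <= #|Cen|)%N.
Proof.
split.
  move/pcard_leP/injfunPex => [f ffun finj].
  pose iota (j : 'I_m) : 'I_n := toIC (f j).
  have hf (j : 'I_m) : exists g, f j = lcoset g N /\ eqv N (g ⋅ x) (x ⋅ g).
    by apply/(cent_quotE hN); apply: ffun; rewrite /= ltn_ord.
  have iC j : iota j \in Cen.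
    have [g [fj e]] := hf j; rewrite inE /iota fj toIC_coset; apply/asboolP.
    exact: (Cen_eqv (eqv_toI g)).
  have iinj : injective iota.
    move=> j k; rewrite /iota.
    have [g [fj _]] := hf j; have [h [fk _]] := hf k.
    rewrite fj fk !toIC_coset => /toI_eqP /(lcoset_eq hN) e.
    apply: val_inj; apply: finj; rewrite ?in_setE /= ?ltn_ord //.
    by rewrite fj fk e.
  have sub : [set iota j | j in 'I_m]%SET \subset Cen.
    by apply/fintype.subsetP => _ /imsetP [j _ ->]; exact: iC.
  by have := subset_leq_card sub; rewrite card_imset // card_ord.
move=> mC; apply/pcard_leP/injfunPex.
pose i0 := toI one.
exists (fun j => lcoset (rI (nth i0 (enum Cen) j)) N).
- move=> j /= jm.
  have jC : nth i0 (enum Cen) j \in Cen.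
    by rewrite -mem_enum mem_nth // -cardE; exact: leq_trans jm mC.
  apply/(cent_quotE hN); exists (rI (nth i0 (enum Cen) j)); split => //.
  by move: jC; rewrite inE => /asboolP.
- move=> j k; rewrite !in_setE /= => jm km /(lcoset_eq hN) /toI_eqP.
  rewrite !toI_rI => /eqP.
  have sj : (j < size (enum Cen))%N by rewrite -cardE; exact: leq_trans jm mC.
  have sk : (k < size (enum Cen))%N by rewrite -cardE; exact: leq_trans km mC.
  by rewrite (nth_uniq _ sj sk (enum_uniq _)) => /eqP.
Qed.

Lemma ecard_Cen : ecard R (cent_quot N x) = (#|Cen|%:R)%:E.
Proof.
apply/eqP; rewrite eq_le; apply/andP; split.
  apply: ge_ereal_sup => _ [k hk <-]; rewrite lee_fin ler_nat.
  exact: (cardle_Cen k).1 hk.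
by apply: ereal_sup_ubound; exists #|Cen| => //; apply/(cardle_Cen _).2.
Qed.

End WithQ.
End Count.

Section Final.
Variable G : profinite_group.
Local Notation "a ⋅ b" := (@pg_mul G a b) (at level 40, left associativity).
Local Notation "a ^-1" := (@pg_inv G a).
Local Notation one := (pg_one G).
Variables (R : realType) (mu : probability (borel G) R).
Hypothesis hmu : haar_prob mu.
Variable x : G.

Lemma open_normal_count (M : set G) : open_normal M -> exists c : nat,
  [/\ (0 < c)%N, ecard R (cent_quot M x) = (c%:R)%:E
    & mu (XN M x) = ((c%:R)^-1)%:E].
Proof.
case=> hM oM; have [Q [Qu Qr Qf]] := fin_reps hM oM.
exists #|Cen x M Q|; split.
- exact: (Cen_pos x hM Qr).
- exact: (ecard_Cen R x hM Qu Qr Qf).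
- exact: (mu_XN hmu x hM oM Qu Qr Qf).
Qed.

Lemma ecard_mono (A B : set G) : open_normal A -> open_normal B -> A `<=` B ->
  ecard R (cent_quot B x) <= ecard R (cent_quot A x).
Proof.
move=> hA hB AB.
have [a [a0 ea ma]] := open_normal_count hA.
have [b [b0 eb mb]] := open_normal_count hB.
rewrite ea eb lee_fin ler_nat.
have : mu (XN A x) <= mu (XN B x).
  apply: le_measure; rewrite ?inE.
  - by apply: open_meas; apply: XN_open; exact: hA.2.
  - by apply: open_meas; apply: XN_open; exact: hB.2.
  - exact: XN_mono.
rewrite ma mb lee_fin ler_pV2 ?ler_nat //.
all: by rewrite inE /= unitfE pnatr_eq0 ltr0n -lt0n ?a0 ?b0.
Qed.

Lemma setmul_normal (A B : set G) : is_normal_subgroup A ->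
  is_normal_subgroup B -> is_normal_subgroup (setmul A B).
Proof.
move=> hA hB; split.
- exists one; first exact: (nH1 hA).
  by exists one; [exact: (nH1 hB) | exact: pmulg1].
- move=> _ _ [a1 A1 [b1 B1 <-]] [a2 A2 [b2 B2 <-]].
  exists (a1 ⋅ a2^-1); first exact: (nHB hA A1 A2).
  exists (a2 ⋅ ((b1 ⋅ b2^-1) ⋅ a2^-1)); first exact: (nHJ' hB a2 (nHB hB B1 B2)).
  by rewrite pinvM !pmulA pmulgKV.
- move=> g _ [a Aa [b Bb <-]].
  exists (g^-1 ⋅ (a ⋅ g)); first exact: (nHJ hA g Aa).
  exists (g^-1 ⋅ (b ⋅ g)); first exact: (nHJ hB g Bb).
  by rewrite !pmulA pmulgK.
Qed.


Variable N : nat -> set G.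
Hypothesis hNo : forall i, (1 <= i)%N -> open_normal (N i).
Hypothesis hNdec : forall i, (1 <= i)%N -> N i.+1 `<=` N i.
Hypothesis hNcap : \bigcap_(i in [set i | (1 <= i)%N]) N i = [set one].

Lemma closed_bound (K : set G) m : closed_normal K ->
  (`I_m #<= cent_quot K x)%card ->
  exists2 i, (1 <= i)%N & ((m%:R)%:E <= ecard R (cent_quot (N i) x)).
Proof.
case=> hK cK /pcard_leP/injfunPex [f ffun finj].
pose g j := xget one (f j).
have hg j : (j < m)%N -> f j = lcoset (g j) K /\ eqv K (g j ⋅ x) (x ⋅ g j).
  move=> jm; have [g' [fj e]] := proj1 (cent_quotE hK _ _) (ffun j jm).
  have : f j (g j).
    rewrite /g; apply: xgetPex; exists g'; rewrite fj; exact: (lcoset_mem hK g').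
  rewrite {1}fj lcosetE /= => e'.
  split; first by rewrite fj; apply/(lcoset_eq hK).
  exact: (Cen_eqv hK e' e).
pose h p := (g (p %/ m)%N)^-1 ⋅ g (p %% m)%N.
have nK : forall p, (p < m * m)%N -> (p %/ m <> p %% m)%N -> ~ K (h p).
  move=> p pB ne Kh; apply: ne.
  have m0 : (0 < m)%N by rewrite lt0n; apply/eqP => m0; move: pB; rewrite m0.
  have jm : (p %/ m < m)%N by rewrite ltn_divLR.
  have km : (p %% m < m)%N by rewrite ltn_mod.
  apply: finj; rewrite ?in_setE //=.
  rewrite (proj1 (hg _ jm)) (proj1 (hg _ km)); apply/(lcoset_eq hK); exact: Kh.
have [i [i1 hi]] := @notin_closed_fin G N hNo hNdec hNcap K h
  (fun p => (p %/ m <> p %% m)%N) (m * m)%N cK nK.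
pose M := setmul (N i) K.
have hNi := (hNo i1).1.
have hM : is_normal_subgroup M := setmul_normal hNi hK.
have NM : N i `<=` M.
  by move=> n Nn; exists n => //; exists one; [exact: (nH1 hK) | exact: pmulg1].
have KM : K `<=` M.
  by move=> k Kk; exists one; [exact: (nH1 hNi) | exists k => //; exact: pmul1g].
have oM : open M.
  exact: (open_super (hNo i1).2 (nH1 hNi) NM (fun a b => nHM hM)).
have mM : (`I_m #<= cent_quot M x)%card.
  apply/pcard_leP/injfunPex; exists (fun j => lcoset (g j) M).
  - move=> j jm; apply/(cent_quotE hM); exists (g j); split => //.
    exact: KM (proj2 (hg j jm)).
  - move=> j k; rewrite !in_setE /= => jm km /(lcoset_eq hM) [n Nn [k' Kk' e]].
    apply: contrapT => jk.
    pose p := (j * m + k)%N.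
    have m0 : (0 < m)%N by lia.
    have pj : (p %/ m)%N = j by rewrite /p divnMDl // divn_small // addn0.
    have pk : (p %% m)%N = k by rewrite /p modnMDl modn_small.
    apply: (hi p _ _ ((h p)^-1 ⋅ (n^-1 ⋅ h p))).
    + rewrite /p; nia.
    + by rewrite pj pk.
    + exact: (nHJ hNi (h p) (nHV hNi Nn)).
    + by rewrite pmulKVg /h pj pk -e pmulKg.
exists i => //.
apply: le_trans (ecard_mono (hNo i1) (conj hM oM) NM).
by apply: ereal_sup_ubound; exists m.
Qed.


Lemma main_result :
  let c1 := ereal_sup [set ecard R (cent_quot (N i) x) | i in [set i | (1 <= i)%N]] in
  let c2 := ereal_sup [set ecard R (cent_quot M x) | M in @open_normal G] in
  let c3 := ereal_sup [set ecard R (cent_quot K x) | K in @closed_normal G] in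
  [/\ c1 = c2, c2 = c3 &
      mu (conj_class x : set (borel G)) =
        match c1 with EFin r => (r^-1)%:E | _ => 0 end].
Proof.
move=> c1 c2 c3.
have e_fin i : (1 <= i)%N -> exists c : nat,
  [/\ (0 < c)%N, ecard R (cent_quot (N i) x) = (c%:R)%:E
    & mu (XN (N i) x) = ((c%:R)^-1)%:E].
  by move=> i1; apply: open_normal_count; exact: hNo.
have c12 : c1 <= c2.
  apply: ereal_sup_le => _ [i i1 <-]; exists (N i) => //; exact: hNo.
have c23 : c2 <= c3.
  apply: ereal_sup_le => _ [M [hM oM] <-]; exists M => //; split => //.
  exact: open_closed_subgroup hM oM.
have c31 : c3 <= c1.
  apply: ge_ereal_sup => _ [K hK <-]; apply: ge_ereal_sup => _ [m hm <-].
  have [i i1 le] := closed_bound hK hm.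
  apply: le_trans le _; apply: ereal_sup_ubound; exists i => //.
have E12 : c1 = c2 by apply/eqP; rewrite eq_le c12 (le_trans c23 c31).
have E23 : c2 = c3 by apply/eqP; rewrite eq_le c23 (le_trans c31 c12).
split => //.
have mconj : measurable (conj_class x : set (borel G)).
  rewrite -[conj_class x]setCK; apply: measurableC; apply: open_meas.
  by rewrite openC; exact: conj_closed.
have ub i : (1 <= i)%N -> mu (conj_class x) <= mu (XN (N i) x).
  move=> i1; apply: le_measure; rewrite ?inE //.
  - by apply: open_meas; apply: XN_open; exact: (hNo i1).2.
  - by apply: conj_XN; exact: (nH1 (hNo i1).1).
have e1ub i : (1 <= i)%N -> ecard R (cent_quot (N i) x) <= c1.
  by move=> i1; apply: ereal_sup_ubound; exists i.
case: (pselect (exists B : nat, forall i, (1 <= i)%N ->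
   ecard R (cent_quot (N i) x) <= (B%:R)%:E)) => [[B hB]|nB].
- pose P := fun c : nat => `[< exists2 i, (1 <= i)%N &
     ecard R (cent_quot (N i) x) = (c%:R)%:E >].
  have exP : exists c, P c.
    by have [c [_ ec _]] := e_fin 1%N erefl; exists c; apply/asboolP; exists 1%N.
  have ubP : forall c, P c -> (c <= B)%N.
    move=> k /asboolP [i i1 ec]; have := hB i i1; by rewrite ec lee_fin ler_nat.
  case: (ex_maxnP exP ubP) => cm /asboolP [i0 i01 ei0] cmax.
  have ec1 : c1 = (cm%:R)%:E.
    apply/eqP; rewrite eq_le; apply/andP; split.
    + apply: ge_ereal_sup => _ [i i1 <-]; have [c [_ ec _]] := e_fin i i1.
      by rewrite ec lee_fin ler_nat; apply: cmax; apply/asboolP; exists i.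
    + by rewrite -ei0; apply: e1ub.
  have eq_after n : mu (XN (N (n + i0)) x) = ((cm%:R)^-1)%:E.
    have i1 : (1 <= n + i0)%N by lia.
    have [c [c0 ec mc]] := e_fin _ i1; rewrite mc.
    have ge : (cm <= c)%N.
      have := ecard_mono (hNo i1) (hNo i01) (Ndec hNdec i01 (leq_addl n i0)).
      by rewrite ei0 ec lee_fin ler_nat.
    have le : (c <= cm)%N by apply: cmax; apply/asboolP; exists (n + i0)%N.
    by have -> : c = cm by apply/eqP; rewrite eqn_leq le ge.
  pose F := fun n => XN (N (n + i0)) x.
  have mF n : measurable (F n : set (borel G)).
    apply: open_meas; apply: XN_open; apply: (hNo (i := (n + i0)%N) _).2; lia.
  have hcv := @nonincreasing_cvg_mu _ _ R mu F.
  rewrite capXN // in hcv.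
  have {}hcv := hcv _ mF mconj.
  have F0 : mu (F 0%N) < +oo.
    by change (mu (XN (N (0 + i0)%N) x) < +oo); rewrite eq_after ltry.
  have {}hcv := hcv F0.
  have {}hcv : (mu \o F) x @[x --> \oo] --> mu (conj_class x).
    apply: hcv => a b ab; rewrite subsetEset; apply: XN_mono.
    apply: (Ndec hNdec _ _); lia.
  have hF : mu \o F = fun=> ((cm%:R)^-1)%:E.
    by apply: funext => k; exact: eq_after k.
  rewrite hF in hcv; rewrite ec1 /=.
  exact: (cvg_unique (@ereal_hausdorff R) hcv (cvg_cst _)).
- have nB' : forall B : nat, exists2 i, (1 <= i)%N &
      (B%:R)%:E < ecard R (cent_quot (N i) x).
    move=> B; apply: contrapT => h; apply: nB; exists B => i i1.
    by rewrite leNgt; apply/negP => lt; apply: h; exists i.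
  have c1y : c1 = +oo.
    have [c [_ ec _]] := e_fin 1%N erefl.
    have := e1ub 1%N erefl; rewrite ec.
    case E : c1 => [r | // | //] hr.
    have hb := archi_boundP (normr_ge0 r).
    have [i i1 lt] := nB' (Num.Def.archi_bound `|r|%R).
    have := e1ub i i1; rewrite E => le.
    have := lt_le_trans lt le; rewrite lte_fin => /(lt_trans hb).
    by rewrite ltNge ler_norm.
  rewrite c1y; apply/eqP; rewrite eq_le measure_ge0 andbT.
  apply/lee_addgt0Pr => eps eps0; rewrite add0e.
  have e0 : (0 <= eps^-1)%R by rewrite invr_ge0 ltW.
  have hBe := archi_boundP e0.
  have [i i1 lt] := nB' (Num.Def.archi_bound eps^-1).
  have [c [c0 ec mc]] := e_fin i i1.
  apply: le_trans (ub i i1) _; rewrite mc lee_fin.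
  move: lt; rewrite ec lte_fin ltr_nat => Bc.
  rewrite invf_ple ?posrE ?ltr0n //.
  by apply: ltW; apply: lt_trans hBe _; rewrite ltr_nat.
Qed.

End Final.

Theorem proposition5p1 (R : realType) (G : profinite_group)
  (hG : @second_countable G)
  (mu : probability (borel G) R) (hmu : haar_prob mu)
  (x : G) (N : nat -> set G)
  (hNo : forall i, (1 <= i)%N -> open_normal (N i))
  (hNdec : forall i, (1 <= i)%N -> N i.+1 `<=` N i)
  (hNcap : \bigcap_(i in [set i | (1 <= i)%N]) N i = [set pg_one G]) :
  let c1 := ereal_sup [set ecard R (cent_quot (N i) x) | i in [set i | (1 <= i)%N]] in
  let c2 := ereal_sup [set ecard R (cent_quot M x) | M in @open_normal G] in
  let c3 := ereal_sup [set ecard R (cent_quot K x) | K in @closed_normal G] in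
  [/\ c1 = c2, c2 = c3 &
      mu (conj_class x : set (borel G)) =
        match c1 with EFin r => (r^-1)%:E | _ => 0 end].
Proof.
exact: (@main_result G R mu hmu x N hNo hNdec hNcap).
Qed.
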